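(* For all $m\ge2$ and $n\ge1$, the Hilbert tensor $\mathcal{H}\in\mathbb{S}_{m,n}$ is strongly completely positive.
   Context: The Hilbert tensor has entries $h_{i_1\ldots i_m}=\frac{1}{i_1+\dots+i_m-m+1}$, $i_j\in[n]$. A tensor $\mathcal{A}\in\mathbb{S}_{m,n}$ is strongly completely positive if $\mathcal{A}=\sum_{k=1}^r(u^{(k)})^m$ with $u^{(k)}\in\mathbb{R}^n_+$ and $\mathrm{span}\{u^{(1)},\dots,u^{(r)}\}=\mathbb{R}^n$, where $(u^m)_{i_1\ldots i_m}=u_{i_1}\cdots u_{i_m}$. *)

(* Defs.v *)
From HB Require Import structures.
From mathcomp Require Import all_boot all_order all_algebra.
Set Implicit Arguments. Unset Strict Implicit. Unset Printing Implicit Defensive.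
Import Order.TTheory GRing.Theory Num.Theory.
Local Open Scope ring_scope.

Definition tensor (R : Type) (m n : nat) := {ffun 'I_m -> 'I_n} -> R.

(* Hilbert tensor: h_{i_1..i_m} = 1/(i_1+...+i_m - m + 1) with 1-based
   indices, i.e. 1/((sum of 0-based indices) + 1). *)
Definition hilbert_tensor (R : fieldType) (m n : nat) : tensor R m n :=
  fun i => ((\sum_(j < m) nat_of_ord (i j)).+1)%:R^-1.

Definition tpow {R : nzRingType} (m : nat) {n : nat} (u : 'I_n -> R) : tensor R m n :=
  fun i => \prod_(j < m) u (i j).

(* Strong complete positivity: A = sum_{k<r} (u^(k))^m with u^(k) in R^n_+,
   the u^(k) being the rows of U, and span{u^(1),...,u^(r)} = R^n,
   i.e. the row space of U has dimension n. *)
Definition strongly_completely_positive (R : numFieldType) (m n : nat)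
  (A : tensor R m n) : Prop :=
  exists (r : nat) (U : 'M[R]_(r, n)),
    [/\ (forall k j, 0 <= U k j),
        \rank U = n &
        forall i, A i = \sum_(k < r) @tpow R m n (fun j => U k j) i].

Arguments hilbert_tensor R m n i : clear implicits.
Arguments tpow {R} m {n} u i.

(* Main.v *)
Require Import Defs.
From HB Require Import structures.
From mathcomp Require Import all_boot all_order all_algebra.
From mathcomp Require Import polyrcf.
Import Order.TTheory GRing.Theory Num.Theory.
Local Open Scope ring_scope.
Set Implicit Arguments. Unset Strict Implicit.

Section Integral.
Variable R : rcfType.
Implicit Types p q r g : {poly R}.

Definition Lint p : R := \sum_(i < size p) p`_i / i.+1%:R.

Lemma Lint_widen p d : (size p <= d)%N -> Lint p = \sum_(i < d) p`_i / i.+1%:R.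
Proof.
move=> hd; rewrite /Lint (big_ord_widen d (fun i => p`_i / i.+1%:R) hd).
rewrite [RHS](bigID (fun i : 'I_d => (i < size p)%N)) /= [X in _ = _ + X]big1 ?addr0 //.
by move=> i; rewrite -leqNgt => hi; rewrite nth_default // mul0r.
Qed.

Lemma LintD p q : Lint (p + q) = Lint p + Lint q.
Proof.
set d := maxn (size p) (size q).
rewrite (@Lint_widen (p + q) d) ?(@Lint_widen p d) ?(@Lint_widen q d);
  rewrite ?leq_maxl ?leq_maxr ?(leq_trans (size_polyD _ _)) //.
by rewrite -big_split /=; apply: eq_bigr => i _; rewrite coefD mulrDl.
Qed.

Lemma LintZ c p : Lint (c *: p) = c * Lint p.
Proof.
rewrite (@Lint_widen (c *: p) (size p)); last exact: size_scale_leq.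
rewrite /Lint mulr_sumr.
by apply: eq_bigr => i _; rewrite coefZ mulrA.
Qed.

Lemma Lint0 : Lint 0 = 0.
Proof. by rewrite /Lint size_poly0 big_ord0. Qed.

Lemma LintN p : Lint (- p) = - Lint p.
Proof. by rewrite -scaleN1r LintZ mulN1r. Qed.

Lemma LintB p q : Lint (p - q) = Lint p - Lint q.
Proof. by rewrite LintD LintN. Qed.

Lemma Lint_sum (I : finType) (F : I -> {poly R}) :
  Lint (\sum_i F i) = \sum_i Lint (F i).
Proof.
by elim/big_rec2: _ => [|i a b _ <-]; rewrite ?Lint0 ?LintD.
Qed.

Lemma Lint_deriv p : Lint p^`() = p.[1] - p.[0].
Proof.
have hs : (size p^`() <= size p)%N.
  by rewrite polyorder.size_deriv leq_pred.
rewrite (Lint_widen hs).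
have -> : \sum_(i < size p) p^`()`_i / i.+1%:R = \sum_(i < size p) p`_i.+1.
  apply: eq_bigr => i _; rewrite coef_deriv -(mulr_natr (p`_i.+1)) mulfK //.
  by rewrite pnatr_eq0.
have -> : p.[1] = \sum_(i < (size p).+1) p`_i.
  rewrite horner_coef big_ord_recr /= nth_default // addr0.
  by apply: eq_bigr => i _; rewrite expr1n mulr1.
rewrite horner_coef0 big_ord_recl addrC addKr.
by apply: eq_bigr => i _; rewrite lift0.

Qed.

Lemma LintXn s : Lint 'X^s = (s.+1%:R)^-1.
Proof.
rewrite /Lint size_polyXn big_ord_recr /= big1 ?add0r.
  by rewrite coefXn eqxx mul1r.
by move=> i _; rewrite coefXn ltn_eqF // mul0r.
Qed.


Definition prim g : {poly R} :=
  \poly_(i < (size g).+1) (if i is j.+1 then g`_j / i%:R else 0).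

Lemma prim_deriv g : (prim g)^`() = g.
Proof.
apply/polyP => i; rewrite coef_deriv coef_poly ltnS.
case: ltnP => hi.
  by rewrite -[_ *+ i.+1]mulr_natr mulfVK // pnatr_eq0.
by rewrite mul0rn nth_default.
Qed.

Lemma Lint_gt0 g : g != 0 -> (forall x, 0 <= g.[x]) -> 0 < Lint g.
Proof.
move=> gn0 gge0.
rewrite -[g]prim_deriv Lint_deriv subr_gt0.
set c := next_root g 0 1.
have c0 : 0 < c by apply: next_root_gt.
have c1 : c <= 1.
  have := next_root_in g 0 1; rewrite in_itv /= => /andP[_].
  by rewrite max_l // ler01.
have h1 : (prim g).[0] < (prim g).[c].
  apply: (@derpr _ _ 0 c); last by rewrite in_itv /= c0 lexx.
  move=> x hx; rewrite prim_deriv lt_def gge0 andbT.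
  by have := next_noroot hx.
apply: (lt_le_trans h1); apply: (ler_hornerW (a := c) (b := 1)).
- by move=> x _; rewrite prim_deriv.
- by rewrite in_itv /= lexx c1.
- by rewrite in_itv /= c1 lexx.
- exact: c1.
Qed.

End Integral.
Section Rod.
Variable R : rcfType.
Implicit Types p q r g : {poly R}.

Lemma dvd_deriv (a : R) e p :
  ('X - a%:P) ^+ e.+1 %| p -> ('X - a%:P) ^+ e %| p^`().
Proof.
case/dvdpP => q ->; rewrite derivM deriv_exp derivXsubC mul1r /=.
rewrite dvdp_add // ?dvdp_mull //.
  by rewrite exprSr dvdp_mulr.
by rewrite -mulr_natr dvdp_mulr.
Qed.

Lemma rolle_list p x0 rest : path <%R x0 rest -> all (root p) (x0 :: rest) ->
  exists t, [/\ size t = size rest, sorted <%R t,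
    all (fun c => (x0 < c) && (c < last x0 rest)) t & all (root p^`()) t].
Proof.
elim: rest x0 => [|x1 rest IH] x0 /=; first by exists [::].
case/andP=> h01 hp /and3P[r0 r1 rr].
have hr : all (root p) (x1 :: rest) by rewrite /= r1 rr.
have [t [st srt allt rt]] := IH x1 hp hr.
have he : p.[x0] = p.[x1] by rewrite (rootP r0) (rootP r1).
have [c hc pc] := @poly_rolle _ x0 x1 p h01 he.
move: hc; rewrite in_itv /= => /andP[c0 c1].
exists (c :: t); split => //=; first by rewrite st.
- rewrite path_sortedE; last exact: lt_trans.
  rewrite srt andbT; apply/allP => y yt.
  by move/allP: (allt) => AL; have /andP[+ _] := AL y yt; apply: lt_trans.
- rewrite c0 /=.
  have hl : x1 <= last x1 rest.
    clear -hp; case: rest hp => // y s hp /=.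
    rewrite (path_sortedE lt_trans) in hp; case/andP: hp => /allP hx1 _.
    by apply/ltW/hx1/mem_last.
  rewrite (lt_le_trans c1 hl) /=.
  move/allP: (allt) => AL.
  apply/allP => y yt; have /andP[a b] := AL y yt.
  by rewrite b (lt_trans h01 a).
- by rewrite /root pc eqxx rt.
Qed.

Variable k : nat.
Definition Fk : {poly R} := ('X * (1 - 'X)) ^+ k.

Lemma Fdvd j : (j <= k)%N ->
  ('X - 0%:P) ^+ (k - j) %| Fk^`(j) /\ ('X - 1%:P) ^+ (k - j) %| Fk^`(j).
Proof.
elim: j => [|j IH] hj.
  rewrite subn0 derivn0 /Fk exprMn; split.
    by rewrite subr0 dvdp_mulr.
  rewrite dvdp_mull // dvdp_exp2r //.
  by rewrite dvdp_XsubCl /root hornerD hornerN hornerX hornerC subrr.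
have [h0 h1] := IH (ltnW hj).
have e : (k - j = (k - j.+1).+1)%N by rewrite subnSK.
by rewrite derivnS; split; apply: dvd_deriv; rewrite -e.
Qed.

Lemma Froot j : (j < k)%N -> root (Fk^`(j)) 0 /\ root (Fk^`(j)) 1.
Proof.
move=> hj; have [h0 h1] := Fdvd (ltnW hj).
have e : (k - j = (k - j).-1.+1)%N by rewrite prednK // subn_gt0.
by split; rewrite -dvdp_XsubCl; [apply: dvdp_trans h0|apply: dvdp_trans h1];
  rewrite e exprS dvdp_mulr.
Qed.


Lemma Froots j : (j <= k)%N -> exists s : seq R, [/\ size s = j, sorted <%R s,
  all (fun x => (0 < x) && (x < 1)) s & all (root (Fk^`(j))) s].
Proof.
elim: j => [|j IH] hj; first by exists [::].
have [s [ss srt s01 rs]] := IH (ltnW hj).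
have [r0 r1] := Froot hj.
have hp : path <%R 0 (rcons s 1).
  rewrite rcons_path (path_sortedE lt_trans) srt andbT.
  apply/andP; split.
    by apply/allP => x xs; have /andP[] := (elimT allP s01) x xs.
  have : last 0 s \in 0 :: s by exact: mem_last.
  rewrite inE => /orP[/eqP -> | ls]; first exact: ltr01.
  by have /andP[] := (elimT allP s01) _ ls.
have ha : all (root (Fk^`(j))) (0 :: rcons s 1) by rewrite /= r0 all_rcons r1 rs.
have [t [st srtt allt rt]] := rolle_list hp ha.
exists t; split => //.
- by rewrite st size_rcons ss.
- by rewrite last_rcons in allt.
Qed.

Lemma Forth j : (j <= k)%N -> forall r, (size r <= j)%N -> Lint (Fk^`(j) * r) = 0.
Proof.
elim: j => [|j IH] hj r hr.
  by move: hr; rewrite leqn0 size_poly_eq0 => /eqP ->; rewrite mulr0 Lint0.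
have [r0 r1] := Froot hj.
have e : Fk^`(j.+1) * r = (Fk^`(j) * r)^`() - Fk^`(j) * r^`().
  by rewrite derivM -derivnS addrK.
have hr' : (size r^`() <= j)%N.
  by rewrite polyorder.size_deriv -subn1 leq_subLR add1n.
rewrite e LintB Lint_deriv (IH (ltnW hj) _ hr').
by rewrite !hornerM (rootP r0) (rootP r1) !mul0r subrr subr0.
Qed.
Lemma size_derivn p j : size p^`(j) = (size p - j)%N.
Proof.
elim: j => [|j IH]; first by rewrite derivn0 subn0.
by rewrite derivnS polyorder.size_deriv IH subnS.
Qed.

Lemma size_Fk : size Fk = (k + k).+1.
Proof.
have e : 'X * (1 - 'X) = - (('X - 1%:P) * 'X) :> {poly R}.
  by rewrite -mulNr opprB polyC1 mulrC.
have hs : size ('X * (1 - 'X) : {poly R}) = 3%N.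
  by rewrite e size_opp size_mulX ?polyXsubC_eq0 // size_XsubC.
rewrite /Fk my_size_exp; last by rewrite -size_poly_eq0 hs.
by rewrite hs mul2n addnn.
Qed.

Lemma size_Fkk : size (Fk^`(k)) = k.+1.
Proof. by rewrite size_derivn size_Fk -addSn addnK. Qed.
End Rod.

Section Quad.
Variable R : rcfType.
Variable k : nat.
Hypothesis k0 : (0 < k)%N.

Lemma quad : exists (x : nat -> R) (w : 'I_k -> R),
  [/\ injective x, (forall i : 'I_k, 0 < x i), (forall i, 0 < w i) &
     forall p : {poly R}, (size p <= k + k)%N -> Lint p = \sum_(i < k) w i * p.[x i]].
Proof.
have [s [ss srt s01 rs]] := @Froots R k k (leqnn k).
set Q := (Fk R k)^`(k) in rs.
have sQ : size Q = k.+1 by exact: size_Fkk.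
have us : uniq s by exact: lt_sorted_uniq.
set pi := \prod_(z <- s) ('X - z%:P).
have eQ : Q = lead_coef Q *: pi.
  by apply: all_roots_prod_XsubC; rewrite ?sQ ?ss ?uniq_rootsE.
have lQ : lead_coef Q != 0 by rewrite lead_coef_eq0 -size_poly_eq0 sQ.
have orth : forall d : {poly R}, (size d <= k)%N -> Lint (pi * d) = 0.
  move=> d hd; have := @Forth R k k (leqnn k) d hd.
  rewrite -/Q {1}eQ -scalerAl LintZ => /eqP; rewrite mulf_eq0 (negPf lQ) /=.
  by move/eqP.
have spi : size pi = k.+1 by rewrite size_prod_XsubC ss.
have pi0 : pi != 0 by rewrite -size_poly_eq0 spi.
pose x (i : nat) : R := if (i < k)%N then nth 0 s i else i.+2%:R.
have s01' : forall i, (i < k)%N -> 0 < x i < 1.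
  move=> i hi; rewrite /x hi.
  by apply: (elimT allP s01); rewrite mem_nth // ss.
have xinj : injective x.
  move=> i j; case: (ltnP i k) => hi; case: (ltnP j k) => hj.
  - by rewrite /x hi hj => /eqP; rewrite nth_uniq ?ss // => /eqP.
  - move=> e; have /andP[_ ] := s01' i hi; rewrite e /x ltnNge hj /= => h.
    have : (1 : R) <= j.+2%:R by rewrite ler1n.
    by rewrite leNgt h.
  - move=> e; have /andP[_ ] := s01' j hj; rewrite -e /x ltnNge hi /= => h.
    have : (1 : R) <= i.+2%:R by rewrite ler1n.
    by rewrite leNgt h.
  - by rewrite /x ltnNge hi ltnNge hj /= => /eqP; rewrite eqr_nat => /eqP [].
have xroot : forall i : 'I_k, pi.[x i] = 0.
  move=> i; apply/rootP; rewrite root_prod_XsubC /x ltn_ord.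
  by rewrite mem_nth // ss.
pose l (i : 'I_k) : {poly R} := tnth (k.-lagrange x) i.
pose w (i : 'I_k) := Lint (l i).
have exact : forall p : {poly R}, (size p <= k + k)%N -> Lint p = \sum_(i < k) w i * p.[x i].
  move=> p hp.
  rewrite [in LHS](divp_eq p pi) LintD mulrC orth ?add0r; last first.
    by rewrite size_divp // spi /= leq_subLR.
  have hr : (size (p %% pi)%R <= k)%N by rewrite -ltnS -spi ltn_modp.
  rewrite (lagrange_gen k0 xinj hr) Lint_sum.
  apply: eq_bigr => i _; rewrite mul_polyC LintZ mulrC; congr (_ * _).
  by rewrite [in RHS](divp_eq p pi) hornerD hornerM xroot mulr0 add0r.
exists x, w; split => //.
- by move=> i; have /andP[] := s01' i (ltn_ord i).
- move=> i.
  have li : (l i).[x i] = 1 by rewrite /l lagrange_sample // eqxx.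
  have l0 : l i != 0.
    by apply/eqP => e; move: li; rewrite e horner0 => /eqP; rewrite eq_sym oner_eq0.
  have -> : w i = Lint (l i ^+ 2).
    rewrite exact; last first.
      rewrite expr2 (leq_trans (size_polyMleq _ _)) //.
      by rewrite /l size_lagrange_ // -subn1 leq_subLR leq_addl.
    rewrite (bigD1 i) //= big1 ?addr0.
      by rewrite horner_exp li expr1n mulr1.
    move=> j ji; rewrite horner_exp /l lagrange_sample //.
    by rewrite eq_sym (negPf ji) expr0n mulr0.
  apply: Lint_gt0; first by rewrite expf_neq0.
  by move=> y; rewrite horner_exp sqr_ge0.
Qed.
End Quad.

Unset Implicit Arguments.

Lemma ker_triv (R : rcfType) (m n : nat) (x : nat -> R) (a : 'I_(m * n) -> R) :
  (0 < m)%N -> injective x -> (forall i, a i != 0) ->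
  forall v : 'rV[R]_n,
  v *m (\matrix_(i < m * n, j < n) (a i * x i ^+ j))^T = 0 -> v = 0.
Proof.
move=> m0 xinj.
case: n a => [|n] a an0 v hv; first by apply/matrixP => i [].
pose P := \poly_(j < n.+1) v 0 (inord j).
have Pr : forall i : 'I_(m * n.+1), P.[x i] = 0.
  move=> i; have /matrixP /(_ 0 i) := hv; rewrite !mxE horner_poly => e.
  apply/eqP; rewrite -(mulrI_eq0 _ (lregP (an0 i))); apply/eqP; rewrite -[in RHS]e.
  rewrite mulr_sumr; apply: eq_bigr => j _; rewrite !mxE inord_val.
  by rewrite mulrCA mulrA.
have P0 : P = 0.
  apply/eqP; apply/negPn/negP => Pn0.
  have := @max_poly_roots _ P [seq x i | i <- iota 0 (m * n.+1)] Pn0.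
  rewrite map_inj_uniq // iota_uniq size_map size_iota.
  have -> : all (root P) [seq x i | i <- iota 0 (m * n.+1)].
    apply/allP => y /mapP [i]; rewrite mem_iota add0n => hi ->.
    by apply/rootP; apply: (Pr (Ordinal hi)).
  move=> /(_ isT isT) h.
  have : (size P <= n.+1)%N by exact: size_poly.
  have : (n.+1 <= m * n.+1)%N by rewrite leq_pmull.
  move=> h1 h2; have := leq_trans h2 h1; by rewrite leqNgt h.
apply/matrixP => i j; rewrite (ord1 i) mxE.
have := congr1 (fun p : {poly R} => p`_j) P0.
by rewrite coef_poly ltn_ord inord_val coef0.
Qed.

Theorem mainTheorem19 (R : rcfType) (m n : nat) :
  (2 <= m)%N -> (1 <= n)%N ->
  strongly_completely_positive (hilbert_tensor R m n).
Proof.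
move=> hm hn.
have m0 : (0 < m)%N by apply: leq_trans hm.
have k0 : (0 < m * n)%N by rewrite muln_gt0 m0.
have [x [w [xinj xpos wpos ex]]] := @quad R (m * n) k0.
pose a (i : 'I_(m * n)) : R := sval (nth_root m.-1 (wpos i)).
have apos : forall i, 0 < a i by move=> i; rewrite /a; case: (nth_root _ _).
have aw : forall i, a i ^+ m = w i.
  by move=> i; rewrite /a; case: (nth_root _ _) => y _ /=; rewrite prednK.
pose U := \matrix_(i < m * n, j < n) (a i * x i ^+ j).
exists (m * n)%N, U; split.
- move=> i j; rewrite mxE mulr_ge0 ?exprn_ge0 //.
    exact: ltW.
  exact: ltW.
- have rf : row_free U^T.
    rewrite -kermx_eq0; apply/eqP/row_matrixP => i; rewrite row0.
    apply: (@ker_triv R m n x a m0 xinj) => [j|].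
      by rewrite gt_eqF.
    by apply/sub_kermxP; exact: row_sub.
  by move: rf; rewrite /row_free mxrank_tr => /eqP.
- move=> idx; rewrite /hilbert_tensor /tpow.
  set S := (\sum_(j < m) nat_of_ord (idx j))%N.
  have hS : (S <= m * n)%N.
    rewrite /S; apply: leq_trans (_ : (\sum_(j < m) n <= m * n)%N).
      by apply: leq_sum => j _; exact: ltnW.
    by rewrite sum_nat_const card_ord.
  rewrite -LintXn ex; last first.
    rewrite size_polyXn; apply: leq_ltn_trans hS _.
    by rewrite -addn1 leq_add2l.
  apply: eq_bigr => i _.
  rewrite (eq_bigr (fun j => a i * x i ^+ idx j)); last by move=> j _; rewrite mxE.
  rewrite big_split /= prodr_const cardE size_enum_ord aw hornerXn.
  by rewrite prodrXr.
Qed.
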